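(* Let $G$ be a digraph and $f$ a discrete Morse function on $G$. Then for any allowed elementary path $v_0v_1\cdots v_n$ in $G$ there is at most one index $i\in\{0,\dots,n\}$ with $f(v_i)=0$.
   Context: A digraph $G=(V,E)$ consists of a set $V$ and $E\subseteq(V\times V)\setminus\{(v,v)\}$; $(u,v)\in E$ is written $u\to v$. An allowed elementary $n$-path is a sequence $v_0\cdots v_n$ of vertices with $v_{i-1}\to v_i\in E$ for $1\le i\le n$. A map $f:V\to[0,+\infty)$ is a discrete Morse function on $G$ if for every allowed elementary path $v_0\cdots v_n$: (i) there is at most one index $i$ with $f(v_i)=0$ such that $v_0\cdots v_{i-1}v_{i+1}\cdots v_n$ is an allowed elementary $(n-1)$-path; (ii) there is at most one vertex $u$ with $f(u)=0$ such that for some $-1\le j\le n$ the sequence $v_0\cdots v_juv_{j+1}\cdots v_n$ (meaning $uv_0\cdots v_n$ if $j=-1$, $v_0\cdots v_nu$ if $j=n$) is an allowed elementary $(n+1)$-path. *)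

(* Defs.v *)
From Stdlib Require Import Reals List Arith.
Import ListNotations.
Open Scope R_scope.

(* Allowed elementary path: every pair of consecutive vertices is an arrow.
   A list of length n+1 is an n-path; [] is the empty (-1)-path. *)
Fixpoint allowed {V : Type} (E : V -> V -> Prop) (p : list V) : Prop :=
  match p with
  | x :: ((y :: _) as t) => E x y /\ allowed E t
  | _ => True
  end.

Definition delete_at {V : Type} (i : nat) (p : list V) : list V :=
  firstn i p ++ skipn (S i) p.

(* insert u so that it sits at (list) position j, 0 <= j <= length p
   (j = 0 : u v_0 ... v_n ;  j = length p : v_0 ... v_n u) *)
Definition insert_at {V : Type} (j : nat) (u : V) (p : list V) : list V :=
  firstn j p ++ u :: skipn j p.

Definition digraph {V : Type} (E : V -> V -> Prop) : Prop :=
  forall v, ~ E v v.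

Definition is_discrete_morse {V : Type} (E : V -> V -> Prop) (f : V -> R) : Prop :=
  (forall v, 0 <= f v) /\
  (forall p : list V, p <> [] -> allowed E p ->
     (forall i1 i2 : nat,
        (exists v, nth_error p i1 = Some v /\ f v = 0) ->
        allowed E (delete_at i1 p) ->
        (exists v, nth_error p i2 = Some v /\ f v = 0) ->
        allowed E (delete_at i2 p) ->
        i1 = i2) /\
     (forall u1 u2 : V,
        f u1 = 0 -> (exists j, (j <= length p)%nat /\ allowed E (insert_at j u1 p)) ->
        f u2 = 0 -> (exists j, (j <= length p)%nat /\ allowed E (insert_at j u2 p)) ->
        u1 = u2)).

(* Main.v *)
Require Import Defs.
From Stdlib Require Import Reals List Arith Lia.
Import ListNotations.
Open Scope R_scope.

Lemma allowed_tail {V} (E : V -> V -> Prop) x l : allowed E (x :: l) -> allowed E l.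
Proof. destruct l; simpl; tauto. Qed.

Lemma allowed_skipn {V} (E : V -> V -> Prop) n : forall l, allowed E l -> allowed E (skipn n l).
Proof.
  induction n; intros l H; [exact H|]. destruct l; simpl; [exact I|].
  apply IHn. exact (allowed_tail E _ _ H).
Qed.

Lemma allowed_firstn {V} (E : V -> V -> Prop) : forall l n, allowed E l -> allowed E (firstn n l).
Proof.
  induction l as [|x l IH]; intros n H; destruct n; simpl; try exact I.
  destruct n; simpl; [exact I|]. destruct l as [|y t]; simpl; [exact I|].
  simpl in H. destruct H as [H1 H2]. split; [exact H1|].
  specialize (IH (S n) H2). simpl in IH. exact IH.
Qed.

Lemma main_lt (V : Type) (E : V -> V -> Prop) (f : V -> R)
  (hf : is_discrete_morse E f) p (Hp : allowed E p) i j (Hij : (i < j)%nat) :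
    (exists v, nth_error p i = Some v /\ f v = 0) ->
    (exists v, nth_error p j = Some v /\ f v = 0) -> False.
Proof.
  intros [a [Ha fa]] [b [Hb fb]].
  assert (Hj : (j < length p)%nat) by (apply nth_error_Some; congruence).
  set (q := firstn (S (j - i)) (skipn i p)).
  assert (Hq : allowed E q) by (apply allowed_firstn, allowed_skipn, Hp).
  assert (Hlen : length q = S (j - i)).
  { unfold q. rewrite length_firstn, length_skipn. lia. }
  assert (Hq0 : nth_error q 0 = Some a).
  { unfold q. rewrite nth_error_firstn by lia. rewrite nth_error_skipn.
    replace (i + 0)%nat with i by lia. exact Ha. }
  assert (Hqj : nth_error q (j - i) = Some b).
  { unfold q. rewrite nth_error_firstn by lia. rewrite nth_error_skipn.
    replace (i + (j - i))%nat with j by lia.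
    destruct (Nat.ltb_spec (j - i) (S (j - i))); [exact Hb | lia]. }
  assert (Hne : q <> []) by (intro e; rewrite e in Hlen; discriminate).
  destruct hf as [_ hf]. destruct (hf q Hne Hq) as [h1 _].
  assert (e : 0%nat = (j - i)%nat).
  { apply h1.
    - exists a; split; assumption.
    - unfold delete_at. exact (allowed_skipn E 1 q Hq).
    - exists b; split; assumption.
    - unfold delete_at. rewrite (skipn_all2 q (n:=S (j - i))) by lia.
      rewrite app_nil_r. apply allowed_firstn, Hq. }
  lia.
Qed.

Theorem lemma4p3 (V : Type) (E : V -> V -> Prop) (f : V -> R)
  (hG : digraph E) (hf : is_discrete_morse E f) :
  forall p : list V, p <> [] -> allowed E p ->
  forall i1 i2 : nat,
    (exists v, nth_error p i1 = Some v /\ f v = 0) ->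
    (exists v, nth_error p i2 = Some v /\ f v = 0) ->
    i1 = i2.
Proof.
  intros p _ Hp i1 i2 H1 H2.
  destruct (lt_eq_lt_dec i1 i2) as [[l|e]|l]; [| exact e |].
  - exfalso. exact (main_lt V E f hf p Hp i1 i2 l H1 H2).
  - exfalso. exact (main_lt V E f hf p Hp i2 i1 l H2 H1).
Qed.
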